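(* Let $B_J\in\mathbb R^{n\times n}$ be irreducible with $B_J\ge O$ elementwise, let $\mathcal B=(B_1,\dots,B_d)$ be a splitting of $B_J$, and assume $\lambda:=\rho(T(\mathcal B))>0$. Then $T(\mathcal B)$ has an elementwise positive eigenvector $[\alpha_1^T,\dots,\alpha_d^T]^T$ for the eigenvalue $\lambda$ such that, elementwise, $0<\lambda\alpha_1\le\alpha_d\le\alpha_{d-1}\le\cdots\le\alpha_2\le\alpha_1$ if $\lambda\le1$, and $0<\alpha_1\le\alpha_2\le\cdots\le\alpha_{d-1}\le\alpha_d\le\lambda\alpha_1$ if $\lambda\ge1$.
   Context: For $B\in\mathbb R^{n\times n}$, a splitting of $B$ of order $d\ge1$ is an ordered $d$-tuple $\mathcal B=(B_1,\dots,B_d)$ of real $n\times n$ matrices with $B_p\neq O$ for all $p$, $\sum_{p=1}^d B_p=B$, and $B_p\circ B_q=O$ (Hadamard product) for $p\ne q$. The iteration matrix of $\mathcal B$ is the $dn\times dn$ matrix $T(\mathcal B)=(I_{dn}-\mathcal L)^{-1}\mathcal U$, where $\mathcal L,\mathcal U$ are $d\times d$ block matrices with $n\times n$ blocks, $\mathcal L_{ij}=B_j$ if $i>j$ and $O$ otherwise, $\mathcal U_{ij}=B_j$ if $i\le j$ and $O$ otherwise. $\rho$ denotes spectral radius; inequalities are elementwise. *)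

(* Defs.v *)
From HB Require Import structures.
From mathcomp Require Import all_boot all_order all_algebra.
From mathcomp Require Import reals.
From mathcomp.real_closed Require Import complex.
Set Implicit Arguments. Unset Strict Implicit. Unset Printing Implicit Defensive.
Import Order.TTheory GRing.Theory Num.Theory.
Local Open Scope ring_scope.

Lemma blk_lt (d n : nat) (k : 'I_(d * n)) : (k %/ n < d)%N.
Proof.
case: n k => [|n] k; first by case: k => k; rewrite muln0.
by rewrite ltn_divLR // ltn_ord.
Qed.

Lemma pos_lt (d n : nat) (k : 'I_(d * n)) : (k %% n < n)%N.
Proof.
case: n k => [|n] k; first by case: k => k; rewrite muln0.
by rewrite ltn_pmod.
Qed.

Lemma bidx_lt (d n : nat) (p : 'I_d) (i : 'I_n) : (p * n + i < d * n)%N.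
Proof.
have hp := ltn_ord p; have hi := ltn_ord i.
apply: (@leq_trans (p * n + n)); first by rewrite ltn_add2l.
by rewrite -mulSnr leq_mul2r hp orbT.
Qed.

(* block number (0-based) and position inside the block of a global index *)
Definition blk (d n : nat) (k : 'I_(d * n)) : 'I_d := Ordinal (blk_lt k).
Definition pos (d n : nat) (k : 'I_(d * n)) : 'I_n := Ordinal (pos_lt k).
Definition bidx (d n : nat) (p : 'I_d) (i : 'I_n) : 'I_(d * n) :=
  Ordinal (bidx_lt p i).

Lemma last_lt (d : nat) (hd : (0 < d)%N) : (d.-1 < d)%N.
Proof. by rewrite ltn_predL. Qed.
Definition first_blk (d : nat) (hd : (0 < d)%N) : 'I_d := Ordinal hd.
Definition last_blk (d : nat) (hd : (0 < d)%N) : 'I_d := Ordinal (last_lt hd).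

Definition vblock (R : Type) (d n : nat) (v : 'cV[R]_(d * n)) (p : 'I_d)
  : 'cV[R]_n := \col_i v (bidx p i) 0.

Definition mxle (R : numDomainType) (m k : nat) (A B : 'M[R]_(m, k)) : Prop :=
  forall i j, A i j <= B i j.
Definition mxpos (R : numDomainType) (m k : nat) (A : 'M[R]_(m, k)) : Prop :=
  forall i j, 0 < A i j.

(* ---- irreducibility: no nonempty proper index set S with A_ij = 0 for all
   i in S, j not in S (equivalently, A is not permutation-similar to a block
   triangular matrix) ---- *)
Definition irreducible_mx (R : numDomainType) (n : nat) (A : 'M[R]_n) : Prop :=
  forall S : {set 'I_n}, S != set0 -> S != setT ->
    exists i, exists j, [/\ i \in S, j \notin S & A i j != 0].

Definition is_splitting (R : numDomainType) (n d : nat) (B : 'M[R]_n)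
  (Bs : 'I_d -> 'M[R]_n) : Prop :=
  [/\ (0 < d)%N,
      forall p, Bs p != 0,
      \sum_(p < d) Bs p = B &
      forall p q, p != q -> forall i j, Bs p i j * Bs q i j = 0].

(* block matrices L and U of the paper:
   L_{pq} = B_q if p > q, else O;  U_{pq} = B_q if p <= q, else O *)
Definition splitL (R : numDomainType) (n d : nat) (Bs : 'I_d -> 'M[R]_n)
  : 'M[R]_(d * n) :=
  \matrix_(k, l) (if (blk l < blk k)%N then Bs (blk l) (pos k) (pos l) else 0).
Definition splitU (R : numDomainType) (n d : nat) (Bs : 'I_d -> 'M[R]_n)
  : 'M[R]_(d * n) :=
  \matrix_(k, l) (if (blk k <= blk l)%N then Bs (blk l) (pos k) (pos l) else 0).

Definition iter_mx (R : numFieldType) (n d : nat) (Bs : 'I_d -> 'M[R]_n)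
  : 'M[R]_(d * n) :=
  invmx (1%:M - splitL Bs) *m splitU Bs.

Definition is_spectral_radius (R : rcfType) (m : nat) (A : 'M[R]_m) (r : R)
  : Prop :=
  let AC := map_mx (real_complex R) A in
  (exists z : R[i], eigenvalue AC z /\ `|z| = r%:C%C) /\
  (forall z : R[i], eigenvalue AC z -> `|z| <= r%:C%C).

(* Main.v *)
Require Import Defs.
From HB Require Import structures.
From mathcomp Require Import all_boot all_order all_algebra.
From mathcomp Require Import reals.
From mathcomp.real_closed Require Import complex polyrcf.
From mathcomp Require Import ring lra zify.
From mathcomp Require boolp classical_sets.
Import Order.TTheory GRing.Theory Num.Theory.
Local Open Scope ring_scope.
Set Implicit Arguments. Unset Strict Implicit. Unset Printing Implicit Defensive.

Section PF.
Variable R : realType.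

Definition nng (p q : nat) (A : 'M[R]_(p, q)) := forall i j, 0 <= A i j.

Lemma Mvec (m c : nat) (P : 'M[R]_m) (y : 'M[R]_(m, c)) :
  nng P -> (forall i, \sum_j P i j < 1) ->
  nng ((1%:M - P) *m y) -> nng y.
Proof.
move=> P0 Ps H i j; rewrite leNgt; apply/negP => yneg.
have [i1 _ Hmin] := @arg_minP _ R 'I_m i xpredT (fun k => y k j) isT.
have Hi1 : y i1 j < 0 := le_lt_trans (Hmin i isT) yneg.
have := H i1 j; rewrite mulmxBl mul1mx !mxE.
have : (\sum_k P i1 k) * y i1 j <= \sum_k P i1 k * y k j.
  rewrite mulr_suml; apply: ler_sum => k _.
  by apply: ler_wpM2l; [exact: P0 | exact: Hmin].
have := Ps i1.
set s := \sum_k _. set t := \sum_k _.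
move=> h1 h2 h3. nra.
Qed.


Lemma Munit (m : nat) (P : 'M[R]_m) :
  nng P -> (forall i, \sum_j P i j < 1) ->
  (1%:M - P) \in unitmx /\ nng (invmx (1%:M - P)).
Proof.
move=> P0 Ps.
have U : (1%:M - P) \in unitmx.
  rewrite -unitmx_tr unitmxE unitfE; apply/negP => /det0P [v vn0 hv].
  have h1 : (1%:M - P) *m v^T = 0 by apply: trmx_inj; rewrite trmx_mul trmxK hv trmx0.
  have a1 : nng v^T by apply: (Mvec P0 Ps); rewrite h1 => i j; rewrite mxE.
  have a2 : nng (- v^T) by apply: (Mvec P0 Ps); rewrite mulmxN h1 oppr0 => i j; rewrite mxE.
  move/negP: vn0; apply; apply/eqP/matrixP => i j.
  have := a1 j i; have := a2 j i; rewrite !mxE => b1 b2; lra.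
split => //; apply: (Mvec P0 Ps); rewrite mulmxV // => i j; rewrite mxE; exact: ler0n.
Qed.


Lemma nng_mul (p q s : nat) (X : 'M[R]_(p, q)) (Y : 'M[R]_(q, s)) :
  nng X -> nng Y -> nng (X *m Y).
Proof.
move=> hX hY i j; rewrite mxE; apply: sumr_ge0 => k _; exact: mulr_ge0.
Qed.

Lemma invmx_eq (m : nat) (X Y : 'M[R]_m) : X \in unitmx -> X *m Y = 1%:M -> invmx X = Y.
Proof.
move=> hX hXY; by rewrite -[invmx X]mulmx1 -hXY mulmxA mulVmx // mul1mx.
Qed.

Definition mxN (p q : nat) (X : 'M[R]_(p, q)) := \sum_i \sum_j `|X i j|.

Lemma mxN_ge0 (p q : nat) (X : 'M[R]_(p, q)) : 0 <= mxN X.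
Proof. by apply: sumr_ge0 => i _; apply: sumr_ge0 => j _. Qed.

Lemma mxN_entry (p q : nat) (X : 'M[R]_(p, q)) i j : `|X i j| <= mxN X.
Proof.
rewrite /mxN (bigD1 i) //= (bigD1 j) //=.
have h1 : 0 <= \sum_(j0 | j0 != j) `|X i j0| by apply: sumr_ge0.
have h2 : 0 <= \sum_(i0 | i0 != i) \sum_j `|X i0 j| by apply: sumr_ge0 => k _; apply: sumr_ge0.
lra.
Qed.

Lemma mxN_row (p q : nat) (X : 'M[R]_(p, q)) i : \sum_j X i j <= mxN X.
Proof.
apply: (le_trans (ler_sum _ (fun j _ => ler_norm (X i j)))).
rewrite /mxN (bigD1 i) //=.
have h2 : 0 <= \sum_(i0 | i0 != i) \sum_j `|X i0 j| by apply: sumr_ge0 => k _; apply: sumr_ge0.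
lra.
Qed.

Lemma mxN_mul (p q s : nat) (X : 'M[R]_(p, q)) (Y : 'M[R]_(q, s)) :
  mxN (X *m Y) <= mxN X * mxN Y.
Proof.
rewrite /mxN.
apply: (@le_trans _ _ (\sum_i \sum_j \sum_k `|X i k| * `|Y k j|)).
  apply: ler_sum => i _; apply: ler_sum => j _; rewrite mxE.
  apply: (le_trans (ler_norm_sum _ _ _)); apply: ler_sum => k _; by rewrite normrM.
have E : \sum_i \sum_j \sum_k `|X i k| * `|Y k j| = \sum_i \sum_k `|X i k| * \sum_j `|Y k j|.
  apply: eq_bigr => i _; rewrite exchange_big; apply: eq_bigr => k _; by rewrite mulr_sumr.
rewrite E mulr_suml; apply: ler_sum => i _; rewrite mulr_suml; apply: ler_sum => k _.
apply: ler_wpM2l => //.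
rewrite (bigD1 k) //=.
have h2 : 0 <= \sum_(i0 | i0 != k) \sum_j `|Y i0 j| by apply: sumr_ge0 => k' _; apply: sumr_ge0.
lra.
Qed.

Lemma step_res (m : nat) (A : 'M[R]_m) (s dl : R) :
  (s%:M - A) \in unitmx -> nng (invmx (s%:M - A)) -> 0 <= dl ->
  dl * mxN (invmx (s%:M - A)) < 1 ->
  ((s - dl)%:M - A) \in unitmx /\ nng (invmx ((s - dl)%:M - A)).
Proof.
move=> hu hn hd hdl.
set Rs := invmx (s%:M - A).
have P0 : nng (dl *: Rs) by move=> i j; rewrite mxE; apply: mulr_ge0.
have Ps : forall i, \sum_j (dl *: Rs) i j < 1.
  move=> i; under eq_bigr do rewrite mxE; rewrite -mulr_sumr.
  apply: le_lt_trans hdl; apply: ler_wpM2l => //; exact: mxN_row.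
have [U N] := Munit P0 Ps.
have E : (s - dl)%:M - A = (s%:M - A) *m (1%:M - dl *: Rs).
  rewrite mulmxBr mulmx1 -scalemxAr mulmxV // scalemx1.
  apply/matrixP => i j; rewrite !mxE; case: (i == j) => /=; ring.
have U2 : ((s - dl)%:M - A) \in unitmx by rewrite E unitmx_mul hu U.
split => //.
rewrite (@invmx_eq _ _ (invmx (1%:M - dl *: Rs) *m Rs)) //.
  exact: nng_mul.
by rewrite E mulmxA -(mulmxA (s%:M - A)) mulmxV // mulmx1 mulmxV.
Qed.

Lemma large_res (m : nat) (A : 'M[R]_m) (t : R) :
  nng A -> 0 < t -> \sum_i \sum_j A i j < t ->
  (t%:M - A) \in unitmx /\ nng (invmx (t%:M - A)).
Proof.
move=> hA ht hs.
have P0 : nng (t^-1 *: A) by move=> i j; rewrite mxE; apply: mulr_ge0 => //; rewrite invr_ge0 ltW.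
have Ps : forall i, \sum_j (t^-1 *: A) i j < 1.
  move=> i; under eq_bigr do rewrite mxE; rewrite -mulr_sumr.
  rewrite -(mulVf (lt0r_neq0 ht)); rewrite ltr_pM2l ?invr_gt0 //.
  apply: le_lt_trans hs; rewrite [leRHS](bigD1 i) //=.
  have h2 : 0 <= \sum_(i0 | i0 != i) \sum_j A i0 j by apply: sumr_ge0 => k _; apply: sumr_ge0.
  lra.
have [U N] := Munit P0 Ps.
have E : t%:M - A = t *: (1%:M - t^-1 *: A).
  rewrite scalerBr scalerA mulfV ?lt0r_neq0 // scale1r scalemx1 //.
have U2 : (t%:M - A) \in unitmx.
  rewrite E unitmxZ ?U // unitfE lt0r_neq0 //.
split => //; rewrite E invmxZ -?E // => i j; rewrite mxE; apply: mulr_ge0 => //.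
by rewrite invr_ge0 ltW.
Qed.


Lemma mxN_add (p q : nat) (X Y : 'M[R]_(p, q)) : mxN (X + Y) <= mxN X + mxN Y.
Proof.
rewrite /mxN -big_split; apply: ler_sum => i _; rewrite -big_split; apply: ler_sum => j _.
rewrite mxE; exact: ler_normD.
Qed.

Lemma mxN_scale (p q : nat) (a : R) (X : 'M[R]_(p, q)) : mxN (a *: X) = `|a| * mxN X.
Proof.
rewrite /mxN mulr_sumr; apply: eq_bigr => i _; rewrite mulr_sumr; apply: eq_bigr => j _.
by rewrite mxE normrM.
Qed.

Lemma mxN_opp (p q : nat) (X : 'M[R]_(p, q)) : mxN (- X) = mxN X.
Proof. by rewrite -scaleN1r mxN_scale normrN normr1 mul1r. Qed.

Lemma res_nng (m : nat) (A : 'M[R]_m) (r : R) :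
  nng A -> (forall t, r < t -> (t%:M - A) \in unitmx) ->
  forall t, r < t -> nng (invmx (t%:M - A)).
Proof.
move=> hA hu t1 ht1; apply: boolp.contrapT => H1.
pose E := fun t => r < t /\ ~ nng (invmx (t%:M - A)).
pose S := \sum_i \sum_j A i j.
have S0 : 0 <= S by apply: sumr_ge0 => i _; apply: sumr_ge0.
have ub : forall x, E x -> x <= S + 1.
  move=> x [hx1 hx2]; rewrite leNgt; apply/negP => hx.
  apply: hx2; apply: (proj2 (large_res hA _ _)); rewrite -/S; lra.
have hsup : classical_sets.has_sup E.
  by split; [exists t1 | exists (S + 1) => x /ub].
pose s := sup E.
have hs : t1 <= s by apply: sup_upper_bound.
have rs : r < s by lra.
have good : forall t, s < t -> nng (invmx (t%:M - A)).
  move=> t hst; apply: boolp.contrapT => Ht.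
  have : t <= s by apply: sup_upper_bound => //; split => //; lra.
  lra.
set Rs := invmx (s%:M - A).
have Us := hu s rs.
have Ns : nng Rs.
  move=> i j; rewrite leNgt; apply/negP => hij.
  pose c := - Rs i j. pose a := mxN Rs. pose K := a + 1.
  have c0 : 0 < c by rewrite /c; lra.
  have ca : c <= a by have := mxN_entry Rs i j; rewrite ltr0_norm //.
  have a0 : 0 <= a := mxN_ge0 Rs.
  pose e := c / (4 * K * K).
  have K0 : 0 < K by rewrite /K; lra.
  have eK : e * (4 * K * K) = c by rewrite /e mulfVK // !mulf_neq0 // ?lt0r_neq0 //.
  have e0 : 0 < e by rewrite /e divr_gt0 // !mulr_gt0 //.
  have eKl : e * K <= 1/4.
    have : 4 * (e * K) * K <= 1 * K by rewrite -eK in ca; rewrite /K in ca *; nra.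
    rewrite ler_pM2r //; lra.
  have ea : e * a <= 1/4 by apply: le_trans eKl; rewrite ler_pM2l // /K; lra.
  have st : s < s + e by lra.
  set Rt := invmx ((s + e)%:M - A).
  have Ut := hu (s + e) (lt_trans rs st).
  have Nt := good _ st.
  have Id : Rs = Rt + e *: (Rs *m Rt).
    have h1 : Rs *m ((s + e)%:M - A) = 1%:M + e *: Rs.
      have -> : (s + e)%:M - A = (s%:M - A) + e *: 1%:M.
        by apply/matrixP => i' j'; rewrite !mxE; case: (i' == j') => /=; ring.
      by rewrite mulmxDr mulVmx // -scalemxAr mulmx1.
    rewrite -[LHS]mulmx1 -(mulmxV Ut) mulmxA h1 mulmxDl mul1mx -scalemxAl //.
  have bnd : mxN Rt <= a + e * a * mxN Rt.
    have eq : Rt = Rs + - (e *: (Rs *m Rt)) by rewrite {1}Id addrK.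
    rewrite {1}eq; apply: (le_trans (mxN_add _ _)); rewrite mxN_opp mxN_scale ger0_norm; last lra.
    rewrite -mulrA lerD2l; apply: ler_wpM2l; [lra | exact: mxN_mul].
  have b0 : 0 <= mxN Rt := mxN_ge0 Rt.
  have bb : mxN Rt <= 2 * K.
    have : e * a * mxN Rt <= 1/4 * mxN Rt by apply: ler_wpM2r.
    rewrite /K; lra.
  have ent : Rs i j >= - (e * (a * mxN Rt)).
    have -> : Rs i j = Rt i j + e * (Rs *m Rt) i j by rewrite {1}Id !mxE.
    have h3 : `|(Rs *m Rt) i j| <= a * mxN Rt by apply: le_trans (mxN_entry _ i j) (mxN_mul _ _).
    have h4 := Nt i j.
    have h5 : - (a * mxN Rt) <= (Rs *m Rt) i j.
      by have := ler_norm (- (Rs *m Rt) i j); rewrite normrN; lra.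
    have : e * (- (a * mxN Rt)) <= e * (Rs *m Rt) i j by rewrite ler_pM2l.
    rewrite mulrN; lra.
  have : a * mxN Rt <= K * (2 * K).
    apply: ler_pM => //; rewrite /K; lra.
  move=> h6.
  have : e * (a * mxN Rt) <= e * (K * (2 * K)) by rewrite ler_pM2l.
  have : e * (K * (2 * K)) = c / 2.
    by rewrite -[c]eK; field.
  rewrite /c in c0 *; lra.
pose dl0 := 1 / (2 * (mxN Rs + 1)).
have a0 : 0 <= mxN Rs := mxN_ge0 Rs.
have dl00 : 0 < dl0 by rewrite /dl0 divr_gt0 //; lra.
have [e [he1 he2] he3] := sup_adherent dl00 hsup.
have hes : e <= s by apply: sup_upper_bound.
apply: he2.
have -> : e = s - (s - e) by ring.
apply: (proj2 (step_res Us Ns _ _)); first lra.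
have : (s - e) * mxN Rs <= dl0 * mxN Rs by apply: ler_wpM2r => //; rewrite /s; lra.
have : dl0 * mxN Rs < 1.
  have h1 : dl0 * (2 * (mxN Rs + 1)) = 1 by rewrite /dl0; field; lra.
  rewrite -h1 ltr_pM2l //; lra.
lra.
Qed.


Lemma poly_right (f : {poly R}) (r : R) :
  (forall t, r < t -> 0 <= f.[t]) -> 0 <= f.[r].
Proof.
move=> H; rewrite leNgt; apply/negP => hr.
have e0 : 0 < - f.[r] by lra.
have [dd d0 hd] := poly_cont r f e0.
have := H (r + dd / 2) ltac:(have : 0 < dd / 2 by rewrite divr_gt0; lra).
have : `|r + dd / 2 - r| < dd.
  rewrite addrAC subrr add0r ger0_norm; last by rewrite divr_ge0 //; lra.
  lra.
move/hd; rewrite ltr_norml; lra.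
Qed.

Lemma sign_const (f : {poly R}) (r : R) :
  (forall t, r < t -> f.[t] != 0) -> forall a b, r < a -> r < b -> 0 < f.[a] * f.[b].
Proof.
move=> H a b.
wlog hab : a b / a <= b.
  move=> W ha hb; have [h|h] := leP a b; first exact: W.
  rewrite mulrC; apply: W => //; exact: ltW.
move=> ha hb; rewrite ltNge; apply/negP => h.
have [x xin rx] := polyrcf.poly_ivt hab h.
move: xin; rewrite in_itv /= => /andP [h1 h2].
have := H x ltac:(lra); by rewrite -rootE rx.
Qed.


Definition evm (p q : nat) (c : R) (M : 'M[{poly R}]_(p, q)) : 'M[R]_(p, q) :=
  map_mx (horner_eval c) M.

Lemma reduce_step (m : nat) (c : R) (q : 'cV[{poly R}]_m) :
  evm c q = 0 -> q != 0 ->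
  exists q' : 'cV[{poly R}]_m,
    [/\ q = ('X - c%:P) *: q', q' != 0 &
        (\sum_i size (q' i ord0) < \sum_i size (q i ord0))%N].
Proof.
move=> h0 hq.
pose q' := map_mx (fun f => f %/ ('X - c%:P)) q.
have dv : forall i, ('X - c%:P) %| q i 0.
  move=> i; rewrite -root_factor_theorem rootE.
  by have := congr1 (fun M : 'M[R]_(m,1) => M i ord0) h0; rewrite /evm !mxE /horner_eval => ->.
have E : q = ('X - c%:P) *: q'.
  apply/matrixP => i j; rewrite (ord1 j) !mxE mulrC divpK //.
have [i0 hi0] : exists i0, q i0 ord0 != 0.
  apply: boolp.contrapT => H; move/negP: hq; apply; apply/eqP/matrixP => i j.
  rewrite (ord1 j) mxE; apply/eqP; apply: boolp.contrapT => H2; apply: H; exists i; exact/negP.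
exists q'; split => //.
  apply/negP => /eqP h; move/negP: hq; apply; by rewrite E h scaler0.
have sz : forall i, size (q' i ord0) = (size (q i ord0)).-1.
  move=> i; rewrite mxE size_divp ?polyXsubC_eq0 // size_XsubC /=; by rewrite subn1.
rewrite (bigD1 i0) //= [X in (_ < X)%N](bigD1 i0) //=.
rewrite -addSn; apply: leq_add.
  rewrite sz prednK // lt0n size_poly_eq0 //.
apply: leq_sum => i _; rewrite sz; exact: leq_pred.
Qed.

Lemma vdecomp (m : nat) (c : R) (q : 'cV[{poly R}]_m) : q != 0 ->
  exists k, exists q' : 'cV[{poly R}]_m,
    q = ('X - c%:P) ^+ k *: q' /\ evm c q' != 0.
Proof.
have : forall N (q : 'cV[{poly R}]_m), (\sum_i size (q i ord0) <= N)%N -> q != 0 ->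
  exists k, exists q' : 'cV[{poly R}]_m,
    q = ('X - c%:P) ^+ k *: q' /\ evm c q' != 0.
  elim=> [|N IH] q0 hN hq.
    have [h|h] := eqVneq (evm c q0) 0; last by exists 0%N, q0; rewrite expr0 scale1r.
    have [q' [_ _ hs]] := reduce_step h hq.
    by move: (leq_trans hs hN); rewrite ltn0.
  have [h|h] := eqVneq (evm c q0) 0; last by exists 0%N, q0; rewrite expr0 scale1r.
  have [q' [E hq' hs]] := reduce_step h hq.
  have [k [q'' [E2 h2]]] := IH q' ltac:(by rewrite -ltnS; apply: leq_trans hs hN) hq'.
  exists k.+1, q''; split => //; by rewrite E E2 scalerA exprS.
move=> H hq; exact: (H _ q (leqnn _) hq).
Qed.


Lemma evm_entry (p q : nat) (c : R) (M : 'M[{poly R}]_(p, q)) i j :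
  evm c M i j = (M i j).[c].
Proof. by rewrite /evm mxE. Qed.

Lemma PF (m : nat) (A : 'M[R]_m) (r : R) (w : 'cV[R]_m) :
  nng A -> (forall t, r < t -> (t%:M - A) \in unitmx) ->
  nng w -> w != 0 -> nng (A *m w - r *: w) ->
  exists x : 'cV[R]_m, [/\ nng x, x != 0 & A *m x = r *: x].
Proof.
move=> hA hu hw wn0 hAw.
have Rn := res_nng hA hu.
have key1 : forall t, r < t -> nng ((t - r) *: (invmx (t%:M - A) *m w) - w).
  move=> t ht.
  have -> : (t - r) *: (invmx (t%:M - A) *m w) - w = invmx (t%:M - A) *m (A *m w - r *: w).
    have -> : A *m w - r *: w = (t - r) *: w - (t%:M - A) *m w.
      rewrite mulmxBl mul_scalar_mx scalerBl; apply/matrixP => i j; rewrite !mxE; ring.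
    by rewrite mulmxBr scalemxAr mulmxA mulVmx ?hu // mul1mx.
  exact: nng_mul (Rn t ht) hAw.
pose M := char_poly_mx A. pose p := char_poly A. pose wp := map_mx polyC w.
pose q := \adj M *m wp.
have Mq : M *m q = p *: wp by rewrite /q mulmxA mul_mx_adj mul_scalar_mx.
have evM : forall t, evm t M = t%:M - A.
  move=> t; apply/matrixP => i j; rewrite /evm /M /char_poly_mx !mxE.
  by case: (i == j); rewrite /horner_eval !hornerE.
have evp : forall t, p.[t] = \det (t%:M - A).
  by move=> t; rewrite /p /char_poly -evM /evm det_map_mx.
have evw : forall t, evm t wp = w.
  by move=> t; apply/matrixP => i j; rewrite /evm !mxE /horner_eval hornerC.
have evq : forall t, evm t q = \adj (t%:M - A) *m w.
  by move=> t; rewrite /q /evm map_mxM map_mx_adj -/(evm t M) evM -/(evm t wp) evw.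
have pnz : forall t, r < t -> p.[t] != 0.
  by move=> t ht; rewrite evp -unitfE -unitmxE hu.
have evq2 : forall t, r < t -> evm t q = p.[t] *: (invmx (t%:M - A) *m w).
  move=> t ht; rewrite evq /invmx hu //= -scalemxAl scalerA -evp mulfV ?pnz // scale1r //.
pose sg : R := if 0 < p.[r + 1] then 1 else -1.
have sp : forall t, r < t -> 0 < sg * p.[t].
  move=> t ht; have := sign_const pnz (ltr_pwDr ltr01 (lexx r)) ht.
  have := pnz (r + 1) ltac:(lra).
  rewrite /sg; case: ifP => h1 h2 h3; first by nra.
  have : p.[r+1] < 0 by rewrite lt_neqAle h2 /=; rewrite leNgt h1.
  nra.
have sg0 : sg != 0 by rewrite /sg; case: ifP => _; [exact: oner_neq0 | rewrite oppr_eq0 oner_neq0].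
have qa : forall t i, r < t -> 0 <= sg * (q i ord0).[t].
  move=> t i ht; rewrite -evm_entry evq2 // mxE mulrA.
  apply: mulr_ge0; [exact: ltW (sp t ht) | exact: (nng_mul (Rn t ht) hw i ord0)].
have qb : forall t i, r < t -> sg * p.[t] * w i ord0 <= sg * ((t - r) * (q i ord0).[t]).
  move=> t i ht; rewrite -evm_entry evq2 // mxE.
  have := key1 t ht i ord0; rewrite !mxE => h.
  have := ler_wpM2l (ltW (sp t ht)) h; rewrite mulr0 => h2.
  move: h2; set z := \sum_j _ => h2.
  have -> : sg * ((t - r) * (p.[t] * z)) = sg * p.[t] * ((t - r) * z) by ring.
  rewrite mulrBr in h2; lra.
have ev0 : forall t, evm t (0 : 'cV[{poly R}]_m) = 0.
  by move=> t; apply/matrixP => a b; rewrite /evm !mxE /horner_eval horner0.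
have evZ : forall t (c : {poly R}) (X : 'cV[{poly R}]_m), evm t (c *: X) = c.[t] *: evm t X.
  by move=> t c X; apply/matrixP => a b; rewrite /evm !mxE /horner_eval hornerM.
have qn0 : q != 0.
  apply/negP => /eqP q0.
  have := evq2 (r + 1) ltac:(lra); rewrite q0 ev0 => /esym /eqP.
  rewrite scaler_eq0 (negbTE (pnz _ _)); last by lra.
  move=> /eqP h; move/negP: wn0; apply; apply/eqP.
  have Ut := hu (r + 1) ltac:(lra).
  by rewrite -[w]mul1mx -(mulmxV Ut) -mulmxA h mulmx0.
have [k [qt [Eq hqt]]] := vdecomp r qn0.
have [mm [pt hpt Ep]] := multiplicity_XsubC p r.
have p0 : p != 0 by apply: monic_neq0; exact: char_poly_monic.
rewrite p0 /= in hpt.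
have hptr : pt.[r] != 0 by move: hpt; rewrite rootE.
have qent : forall t i, (q i ord0).[t] = (t - r) ^+ k * (qt i ord0).[t].
  by move=> t i; rewrite Eq mxE hornerM horner_exp hornerXsubC.
have pev : forall t, p.[t] = pt.[t] * (t - r) ^+ mm.
  by move=> t; rewrite Ep hornerM horner_exp hornerXsubC.
have [i wi] : exists i, 0 < w i ord0.
  apply: boolp.contrapT => H; move/negP: wn0; apply; apply/eqP/matrixP => a b.
  rewrite (ord1 b) mxE; apply/eqP; rewrite eq_le hw andbT leNgt; apply/negP => h.
  by apply: H; exists a.
have spt : forall t, r < t -> 0 < sg * pt.[t].
  move=> t ht; have := sp t ht; rewrite pev mulrA pmulr_lgt0 //.
  by apply: exprn_gt0; lra.
have sptr : 0 < sg * pt.[r].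
  have h : 0 <= (sg%:P * pt).[r].
    by apply: poly_right => t ht; rewrite hornerM hornerC; exact: ltW (spt t ht).
  rewrite hornerM hornerC in h; rewrite lt_neqAle h andbT eq_sym mulf_neq0 //.
have hk : (k < mm)%N.
  rewrite ltnNge; apply/negP => hmk.
  pose f := sg%:P * (('X - r%:P) ^+ (k.+1 - mm) * qt i ord0) - (sg * w i ord0)%:P * pt.
  have fe : forall t, f.[t] = sg * ((t - r) ^+ (k.+1 - mm) * (qt i ord0).[t]) - sg * w i ord0 * pt.[t].
    by move=> t; rewrite /f !hornerE.
  have : 0 <= f.[r].
    apply: poly_right => t ht; rewrite fe.
    have u0 : 0 < t - r by lra.
    have U0 : 0 < (t - r) ^+ mm by apply: exprn_gt0.
    have h := qb t i ht; rewrite qent pev in h.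
    have ee : (t - r) * (t - r) ^+ k = (t - r) ^+ mm * (t - r) ^+ (k.+1 - mm).
      by rewrite -exprS -exprD subnKC // ltnW // ltnS.
    have h' : (t - r) ^+ mm * (sg * w i ord0 * pt.[t]) <=
              (t - r) ^+ mm * (sg * ((t - r) ^+ (k.+1 - mm) * (qt i ord0).[t])).
      have -> : (t - r) ^+ mm * (sg * ((t - r) ^+ (k.+1 - mm) * (qt i ord0).[t])) =
                sg * ((t - r) * ((t - r) ^+ k * (qt i ord0).[t])).
        transitivity (sg * (((t - r) * (t - r) ^+ k) * (qt i ord0).[t])); last by ring.
        rewrite ee; ring.
      apply: le_trans h; rewrite le_eqVlt; apply/orP; left; apply/eqP; ring.
    rewrite ler_pM2l // in h'; lra.
  rewrite fe subrr expr0n /=.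
  have -> : (k.+1 - mm == 0)%N = false by apply/negbTE; rewrite subn_eq0 -ltnNge ltnS.
  rewrite mul0r mulr0 sub0r => h.
  have : 0 < w i ord0 * (sg * pt.[r]) by apply: mulr_gt0.
  have -> : w i ord0 * (sg * pt.[r]) = sg * w i ord0 * pt.[r] by ring.
  lra.
have ee : ('X - r%:P) ^+ mm = ('X - r%:P) ^+ k * ('X - r%:P) ^+ (mm - k).
  by rewrite -exprD subnKC // ltnW.
have E1 : M *m qt = (pt * ('X - r%:P) ^+ (mm - k)) *: wp.
  have h := Mq; rewrite Eq Ep ee -scalemxAr in h.
  have nz : ('X - r%:P) ^+ k != 0 by rewrite expf_neq0 // polyXsubC_eq0.
  apply/matrixP => a b; have := congr1 (fun Z : 'M[{poly R}]_(m, 1) => Z a b) h.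
  rewrite !mxE => h2; apply: (mulfI nz); rewrite h2; ring.
have E2 : (r%:M - A) *m evm r qt = 0.
  have evMul : evm r (M *m qt) = evm r M *m evm r qt by rewrite /evm map_mxM.
  have := congr1 (evm r) E1; rewrite evMul evM evZ evw => ->.
  rewrite hornerM horner_exp hornerXsubC subrr expr0n.
  have -> : (mm - k == 0)%N = false by apply/negbTE; rewrite subn_eq0 -ltnNge.
  by rewrite mulr0 scale0r.
exists (sg *: evm r qt); split.
- move=> a b; rewrite (ord1 b) mxE evm_entry.
  have h : 0 <= (sg%:P * qt a ord0).[r].
    apply: poly_right => t ht; rewrite hornerM hornerC.
    have := qa t a ht; rewrite qent.
    have -> : sg * ((t - r) ^+ k * (qt a ord0).[t]) = (t - r) ^+ k * (sg * (qt a ord0).[t]) by ring.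
    rewrite pmulr_rge0 //; apply: exprn_gt0; lra.
  by rewrite hornerM hornerC in h.
- by rewrite scaler_eq0 negb_or sg0.
- rewrite -scalemxAr scalerA mulrC -scalerA; congr (_ *: _).
  move: E2; rewrite mulmxBl mul_scalar_mx => /eqP; rewrite subr_eq0 => /eqP <- //.
Qed.


Lemma spec_facts (m : nat) (A : 'M[R]_m) (r : R) :
  nng A -> is_spectral_radius A r -> 0 < r ->
  (forall t, r < t -> (t%:M - A) \in unitmx) /\
  exists w : 'cV[R]_m, [/\ nng w, w != 0 & nng (A *m w - r *: w)].
Proof.
move=> hA [[z [ez nz]] hb] r0.
split.
  move=> t ht; apply: boolp.contrapT => hn.
  have : \det (t%:M - A) == 0.
    by apply: boolp.contrapT => h; apply: hn; rewrite unitmxE unitfE; apply/negP.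
  move=> /det0P [v vn0 hv].
  have ev : eigenvalue A t.
    apply/eigenvalueP; exists v => //.
    by move/eqP: hv; rewrite mulmxBr mul_mx_scalar subr_eq0 => /eqP <-.
  have := hb (t%:C)%C; rewrite (eigenvalue_map (real_complex R)) ev => /(_ isT).
  rewrite normc_def /= expr0n /= addr0 sqrtr_sqr lecR ger0_norm; lra.
pose AC := map_mx (real_complex R) A.
have hdet : \det (AC - z%:M)^T == 0.
  rewrite det_tr; move: ez; rewrite /eigenvalue /eigenspace; apply: contraNT => h.
  by rewrite kermx_eq0 row_free_unit unitmxE unitfE.
move: hdet => /det0P [v vn0 hv].
pose u := v^T.
have hu : AC *m u = z *: u.
  have : (AC - z%:M) *m u = 0 by apply: trmx_inj; rewrite trmx_mul trmxK hv trmx0.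
  by rewrite mulmxBl mul_scalar_mx => /eqP; rewrite subr_eq0 => /eqP.
have un0 : u != 0.
  apply: contra vn0 => /eqP h; apply/eqP; by rewrite -[v]trmxK -/u h trmx0.
clearbody u.
pose w := \col_i complex.Re `|u i ord0|.
have wE : forall i, (w i ord0)%:C%C = `|u i ord0|.
  by move=> i; rewrite mxE RRe_real // normr_real.
clearbody w.
have w0 : nng w.
  by move=> i j; rewrite (ord1 j) -lecR wE /=; exact: normr_ge0.
exists w; split => //.
- apply/negP => /eqP w0'; move/negP: un0; apply; apply/eqP.
  apply/matrixP => i j; rewrite (ord1 j) [RHS]mxE.
  have h := wE i; rewrite w0' mxE in h.
  by apply/eqP; rewrite -normr_eq0 -h.
- move=> i j; rewrite (ord1 j).
  have key : r * w i ord0 <= \sum_k A i k * w k ord0.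
    have := congr1 (fun M : 'M[R[i]]_(m, 1) => `|M i ord0|) hu; rewrite /= !mxE normrM nz => h.
    rewrite -lecR rmorphM /= wE -h rmorph_sum /=.
    apply: (le_trans (ler_norm_sum _ _ _)); rewrite le_eqVlt; apply/orP; left; apply/eqP.
    apply: eq_bigr => k _; rewrite normrM !mxE rmorphM /= wE ger0_norm //.
    by rewrite ler0c; exact: hA.
  by rewrite !mxE subr_ge0.
Qed.


Lemma blk_bidx (d n : nat) (p : 'I_d) (i : 'I_n) : blk (bidx p i) = p.
Proof.
apply: val_inj => /=; have n0 : (0 < n)%N := leq_ltn_trans (leq0n i) (ltn_ord i).
by rewrite divnMDl // divn_small // addn0.
Qed.

Lemma pos_bidx (d n : nat) (p : 'I_d) (i : 'I_n) : pos (bidx p i) = i.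
Proof.
apply: val_inj => /=; by rewrite modnMDl modn_small.
Qed.

Lemma bidx_eta (d n : nat) (k : 'I_(d * n)) : bidx (blk k) (pos k) = k.
Proof. by apply: val_inj => /=; rewrite -divn_eq. Qed.

Lemma sum_blk (d n : nat) (F : 'I_(d * n) -> R) :
  \sum_k F k = \sum_(q < d) \sum_(j < n) F (bidx q j).
Proof.
rewrite pair_bigA /= (reindex (fun x : 'I_d * 'I_n => bidx x.1 x.2)) //=.
apply: onW_bij; exists (fun k => (blk k, pos k)) => [[q j]|k] /=.
  by rewrite blk_bidx pos_bidx.
by rewrite bidx_eta.
Qed.

Lemma tri_nng (N c : nat) (L : 'M[R]_N) (y b : 'M[R]_(N, c)) :
  nng L -> (forall k l : 'I_N, (k <= l)%N -> L k l = 0) ->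
  (1%:M - L) *m y = b -> nng b -> nng y.
Proof.
move=> hL hT hy hb k j.
suff : forall K (k : 'I_N), (k < K)%N -> 0 <= y k j by apply; exact: ltnSn.
elim=> [|K IH] k' hk; first by rewrite ltn0 in hk.
have e : y k' j = b k' j + \sum_l L k' l * y l j.
  rewrite -hy mulmxBl mul1mx !mxE; ring.
rewrite e; apply: addr_ge0 => //; apply: sumr_ge0 => l _.
have [hl|hl] := ltnP l k'.
  by apply: mulr_ge0 => //; apply: IH; apply: leq_trans hl _; rewrite -ltnS.
by rewrite hT // mul0r.
Qed.

Lemma chain_down (d : nat) (hd : (0 < d)%N) (f : 'I_d -> R) :
  (forall p q : 'I_d, q = p.+1 :> nat -> f q <= f p) -> forall p, f (last_blk hd) <= f p.
Proof.
move=> H p.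
suff : forall K (p : 'I_d), (d.-1 - p)%N = K -> f (last_blk hd) <= f p by apply.
elim=> [|K IH] p' hp.
  have -> : p' = last_blk hd.
    apply: val_inj => /=; have := ltn_ord p'; lia.
  done.
have hlt : (p'.+1 < d)%N.
  have := ltn_ord p'; lia.
apply: le_trans (IH (Ordinal hlt) _) (H p' (Ordinal hlt) erefl).
rewrite /=; lia.
Qed.

Lemma chain_up (d : nat) (hd : (0 < d)%N) (f : 'I_d -> R) :
  (forall p q : 'I_d, q = p.+1 :> nat -> f q <= f p) -> forall p, f p <= f (first_blk hd).
Proof.
move=> H p.
suff : forall K (p : 'I_d), (p : nat) = K -> f p <= f (first_blk hd) by apply.
elim=> [|K IH] p' hp.
  by have -> : p' = first_blk hd by apply: val_inj.
have hlt : (K < d)%N by have := ltn_ord p'; lia.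
apply: le_trans (H (Ordinal hlt) p' hp) (IH (Ordinal hlt) erefl).
Qed.


Lemma unit_tri (N : nat) (L : 'M[R]_N) :
  (forall k l : 'I_N, (k <= l)%N -> L k l = 0) -> (1%:M - L) \in unitmx.
Proof.
move=> Ltri.
have trig : is_trig_mx (1%:M - L).
  apply/is_trig_mxP => i j hij; rewrite !mxE (Ltri i j (ltnW hij)) oppr0 addr0.
  have -> : (i == j) = false by apply/negbTE; rewrite neq_ltn hij.
  by [].
rewrite unitmxE unitfE (det_trig trig).
have h1 : \prod_i (1%:M - L) i i = 1.
  by apply: big1 => i _; rewrite !mxE eqxx (Ltri i i (leqnn _)) oppr0 addr0.
by rewrite h1 oner_neq0.
Qed.

End PF.

Unset Implicit Arguments.

Theorem proposition3p1 (R : realType) (n d : nat) (hd : (0 < d)%N)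
  (BJ : 'M[R]_n) (Bs : 'I_d -> 'M[R]_n) (lambda : R) :
  irreducible_mx BJ ->
  mxle 0 BJ ->
  is_splitting BJ Bs ->
  is_spectral_radius (iter_mx Bs) lambda ->
  0 < lambda ->
  exists v : 'cV[R]_(d * n),
    [/\ mxpos v,
        iter_mx Bs *m v = lambda *: v,
        lambda <= 1 ->
          [/\ mxpos (lambda *: vblock v (first_blk hd)),
              mxle (lambda *: vblock v (first_blk hd)) (vblock v (last_blk hd)) &
              forall p q : 'I_d, q = p.+1 :> nat ->
                mxle (vblock v q) (vblock v p)] &
        1 <= lambda ->
          [/\ mxpos (vblock v (first_blk hd)),
              forall p q : 'I_d, q = p.+1 :> nat ->
                mxle (vblock v p) (vblock v q) &
              mxle (vblock v (last_blk hd)) (lambda *: vblock v (first_blk hd))]].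
Proof.
move=> hirr hBJ [hd' hnz hsum hdisj] hspec hl.
pose L := splitL Bs. pose U := splitU Bs.
have Bnn : forall p i j, 0 <= Bs p i j.
  move=> p i j; have [->|h] := eqVneq (Bs p i j) 0; first by [].
  have -> : Bs p i j = BJ i j.
    rewrite -hsum summxE (bigD1 p) //= big1 ?addr0 // => q hq.
    by have /eqP := hdisj q p hq i j; rewrite mulf_eq0 (negbTE h) orbF => /eqP.
  by have := hBJ i j; rewrite mxE.
have Lnn : nng L by move=> k l; rewrite /L /splitL mxE; case: ifP.
have Unn : nng U by move=> k l; rewrite /U /splitU mxE; case: ifP.
have Ltri : forall k l : 'I_(d * n), (k <= l)%N -> L k l = 0.
  move=> k l hkl; rewrite /L /splitL mxE; case: ifP => // h.
  by move: h; rewrite /= ltnNge leq_div2r.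
have Uni : (1%:M - L) \in unitmx.
  exact: unit_tri Ltri.
have Inn : nng (invmx (1%:M - L)).
  apply: (tri_nng Lnn Ltri (mulmxV Uni)) => i j; rewrite mxE; exact: ler0n.
have Tnn : nng (iter_mx Bs) := nng_mul Inn Unn.
have [hu [w [w0 wn0 hw]]] := spec_facts Tnn hspec hl.
have [x [x0 xn0 hx]] := PF Tnn hu w0 wn0 hw.
exists x.
have hUx : U *m x = lambda *: x - lambda *: (L *m x).
  have := congr1 (mulmx (1%:M - L)) hx.
  rewrite /iter_mx mulmxA mulmxA mulmxV // mul1mx -/L -/U => ->.
  by rewrite -scalemxAr mulmxBl mul1mx scalerBr.
pose beta (q : 'I_d) (j : 'I_n) := x (bidx q j) 0.
pose G (q : 'I_d) (i : 'I_n) := \sum_j Bs q i j * beta q j.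
pose Sge (p : nat) i := \sum_(q < d | (p <= q)%N) G q i.
pose Slt (p : nat) i := \sum_(q < d | (q < p)%N) G q i.
have hUe : forall p i, (U *m x) (bidx p i) 0 = Sge p i.
  move=> p i; rewrite mxE sum_blk /Sge [RHS]big_mkcond; apply: eq_bigr => q _.
  rewrite /G; under eq_bigr do rewrite /U /splitU mxE !blk_bidx !pos_bidx.
  case: ifP => _ //; by rewrite big1 // => j _; rewrite mul0r.
have hLe : forall p i, (L *m x) (bidx p i) 0 = Slt p i.
  move=> p i; rewrite mxE sum_blk /Slt [RHS]big_mkcond; apply: eq_bigr => q _.
  rewrite /G; under eq_bigr do rewrite /L /splitL mxE !blk_bidx !pos_bidx.
  case: ifP => _ //; by rewrite big1 // => j _; rewrite mul0r.
have ent : forall (Y : 'cV[R]_(d * n)) k, (lambda *: x - lambda *: Y) k 0 = lambda * x k 0 - lambda * Y k 0.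
  by move=> Y k; rewrite !mxE.
have hE : forall (p : 'I_d) i, Sge p i = lambda * beta p i - lambda * Slt p i.
  move=> p i; have := congr1 (fun M : 'cV[R]_(d * n) => M (bidx p i) 0) hUx.
  by rewrite /= hUe ent hLe.
have Gnn : forall q i, 0 <= G q i.
  move=> q i; apply: sumr_ge0 => j _; apply: mulr_ge0 => //; exact: x0.
have Sge_split : forall (p : 'I_d) i, Sge p i = G p i + Sge p.+1 i.
  move=> p i; rewrite /Sge (bigD1 p) //=; congr (_ + _); apply: eq_bigl => q.
  by rewrite ltn_neqAle andbC; congr (_ && _); rewrite eq_sym.
have Slt_split : forall (p : 'I_d) i, Slt p.+1 i = G p i + Slt p i.
  move=> p i; rewrite /Slt (bigD1 p) //=; congr (_ + _); apply: eq_bigl => q.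
  by rewrite ltnS ltn_neqAle andbC.
have Sge_d : forall i, Sge d i = 0.
  move=> i; rewrite /Sge big1 // => q hq; by move: hq; rewrite leqNgt ltn_ord.
have Slt_0 : forall i, Slt 0 i = 0 by move=> i; rewrite /Slt big1.
have Stot : forall i, Sge 0 i = Slt d i by move=> i; apply: eq_bigl => q; rewrite ltn_ord.
pose f0 := first_blk hd. pose fl := last_blk hd.
have E0 : forall i, lambda * beta f0 i = Sge 0 i.
  move=> i; have := hE f0 i; rewrite /= Slt_0 mulr0 subr0 => <- //.
have hF : forall (p q : 'I_d) i, q = p.+1 :> nat ->
    lambda * beta q i = lambda * beta p i + (lambda - 1) * G p i.
  move=> p q i hq.
  have h1 := hE p i; have h2 := hE q i; rewrite hq in h2.
  rewrite Sge_split in h1; rewrite Slt_split in h2.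
  rewrite mulrDr in h2; lra.
have hZ : forall i, lambda * (lambda * beta f0 i) = lambda * beta fl i + (lambda - 1) * G fl i.
  move=> i; have h1 := hE fl i.
  have e1 : (fl : nat).+1 = d by rewrite /= prednK.
  rewrite Sge_split e1 Sge_d addr0 in h1.
  have h2 := Stot i; rewrite -e1 Slt_split -E0 in h2.
  rewrite h2; lra.
have bnn : forall p j, 0 <= beta p j by move=> p j; exact: x0.
have mon1 : lambda <= 1 -> forall (p q : 'I_d) j, q = p.+1 :> nat -> beta q j <= beta p j.
  move=> hl1 p q j hq; have := hF p q j hq; have := Gnn p j => g0 h.
  have : lambda * beta q j <= lambda * beta p j by rewrite h; nra.
  by rewrite ler_pM2l.
have mon2 : 1 <= lambda -> forall (p q : 'I_d) j, q = p.+1 :> nat -> beta p j <= beta q j.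
  move=> hl1 p q j hq; have := hF p q j hq; have := Gnn p j => g0 h.
  have : lambda * beta p j <= lambda * beta q j by rewrite h; nra.
  by rewrite ler_pM2l.
have last1 : lambda <= 1 -> forall j, lambda * beta f0 j <= beta fl j.
  move=> hl1 j; have := hZ j; have := Gnn fl j => g0 h.
  have : lambda * (lambda * beta f0 j) <= lambda * beta fl j by rewrite h; nra.
  by rewrite ler_pM2l.
have last2 : 1 <= lambda -> forall j, beta fl j <= lambda * beta f0 j.
  move=> hl1 j; have := hZ j; have := Gnn fl j => g0 h.
  have : lambda * beta fl j <= lambda * (lambda * beta f0 j) by rewrite h; nra.
  by rewrite ler_pM2l.
have [c [C [c0 lo hi]]] : exists c C, [/\ 0 < c, forall p j, c * beta f0 j <= beta p j &
    forall p j, beta p j <= C * beta f0 j].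
  have [hl1|hl1] := leP lambda 1.
    exists lambda, 1; split => // p j.
      apply: le_trans (last1 hl1 j) _.
      exact: (chain_down hd (f := fun p => beta p j) (fun p q hq => mon1 hl1 p q j hq)).
    rewrite mul1r; exact: (chain_up hd (f := fun p => beta p j) (fun p q hq => mon1 hl1 p q j hq)).
  have hl2 : 1 <= lambda by exact: ltW.
  exists 1, lambda; split => // p j.
    rewrite mul1r; have := chain_up hd (f := fun p => - beta p j)
      (fun p q hq => ltac:(rewrite lerN2; exact: mon2 hl2 p q j hq)) p.
    by rewrite lerN2.
  have := chain_down hd (f := fun p => - beta p j)
    (fun p q hq => ltac:(rewrite lerN2; exact: mon2 hl2 p q j hq)) p.
  rewrite lerN2 => h; exact: le_trans h (last2 hl2 j).
have xE : forall k, x k 0 = beta (blk k) (pos k) by move=> k; rewrite /beta bidx_eta.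
have bpos : forall j, 0 < beta f0 j.
  move=> j; rewrite lt_neqAle bnn andbT; apply/negP => /eqP hj0.
  pose S := [set j | beta f0 j == 0].
  have [ST|SnT] := eqVneq S setT.
    move/negP: xn0; apply; apply/eqP/matrixP => k j'; rewrite (ord1 j') [RHS]mxE xE.
    apply/eqP; rewrite eq_le bnn andbT.
    have : beta f0 (pos k) == 0 by have := in_setT (pos k); rewrite -ST inE.
    move/eqP => h; have := hi (blk k) (pos k); by rewrite h mulr0.
  have Sn0 : S != set0 by apply/set0Pn; exists j; rewrite inE -hj0.
  have [i [j' [iS j'S bij]]] := hirr S Sn0 SnT.
  move: iS j'S; rewrite !inE => /eqP bi0 bj'.
  have G0 : forall q, G q i = 0.
    have hs : Sge 0 i = 0 by rewrite -E0 bi0 mulr0.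
    move=> q; exact: (psumr_eq0P (fun q _ => Gnn q i) hs (isT : (0 <= q)%N)).
  have T0 : forall q, Bs q i j' * beta q j' = 0.
    move=> q; apply: (psumr_eq0P (P := xpredT) (fun j _ => mulr_ge0 (Bnn q i j) (bnn q j))) => //.
    exact: G0.
  have [q hq] : exists q, Bs q i j' != 0.
    apply: boolp.contrapT => H; move/negP: bij; apply; apply/eqP.
    rewrite -hsum summxE big1 // => q _; apply/eqP; apply: boolp.contrapT => H2.
    by apply: H; exists q; apply/negP.
  have := T0 q; move/eqP; rewrite mulf_eq0 (negbTE hq) /= => /eqP bq0.
  have := lo q j'; rewrite bq0.
  have : 0 < beta f0 j' by rewrite lt_neqAle eq_sym bj' bnn.
  move=> h1 h2; have : 0 < c * beta f0 j' by apply: mulr_gt0.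
  lra.
have vbE : forall (p : 'I_d) i, vblock x p i 0 = beta p i by move=> p i; rewrite mxE.
split.
- move=> k j; rewrite (ord1 j) xE; apply: lt_le_trans (lo _ _); exact: mulr_gt0.
- exact: hx.
- move=> hl1; split.
  + move=> i j; rewrite (ord1 j) mxE vbE; exact: mulr_gt0.
  + move=> i j; rewrite (ord1 j) mxE !vbE; exact: last1.
  + move=> p q hq i j; rewrite (ord1 j) !vbE; exact: mon1.
- move=> hl1; split.
  + move=> i j; rewrite (ord1 j) vbE; exact: bpos.
  + move=> p q hq i j; rewrite (ord1 j) !vbE; exact: mon2.
  + move=> i j; rewrite (ord1 j) [in X in _ <= X]mxE !vbE; exact: last2.
Qed.
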